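(* Let $m,a,b,t\in\mathbb{N}$ with $m\geq 3$, $a\geq 1$, $t\in\{2,\ldots,m-1\}$ and $(t-1)(am+1)<bm+t<t(am+1)$, let $S=\langle m,\ am+1,\ bm+t\rangle$ (a MANS-semigroup with embedding dimension $3$), $q=\left\lfloor\frac{m-1}{t}\right\rfloor$ and $r=(m-1)\bmod t$. (1) If $t$ divides $m$, then $\mathrm{PF}(S)=\{q(bm+t)+r(am+1)-m\}$. (2) If $t$ does not divide $m$, then $\mathrm{PF}(S)=\{(q-1)(bm+t)+(t-1)(am+1)-m,\ q(bm+t)+r(am+1)-m\}$.
   Context: $\mathbb{N}=\{0,1,2,\ldots\}$. $\langle A\rangle$ is the submonoid of $(\mathbb{N},+)$ generated by $A$; a numerical semigroup is a submonoid of $\mathbb{N}$ with finite complement. A pseudo-Frobenius number of $S$ is an $x\in\mathbb{Z}\setminus S$ with $x+s\in S$ for all $s\in S\setminus\{0\}$; $\mathrm{PF}(S)$ is the set of them. A MANS-semigroup is a numerical semigroup with $w(1)<\cdots<w(\mathrm{m}(S)-1)$, where $\mathrm{m}(S)$ is the least element of $S\setminus\{0\}$ and $w(i)$ the least element of $S$ congruent to $i$ modulo $\mathrm{m}(S)$. $a\bmod b$ is the remainder of the division of $a$ by $b$. *)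

(* Defs.v *)
From mathcomp Require Import all_boot all_order all_algebra.
Set Implicit Arguments. Unset Strict Implicit. Unset Printing Implicit Defensive.
Import Order.TTheory GRing.Theory Num.Theory.
Local Open Scope ring_scope.

Inductive gen_monoid (A : nat -> Prop) : nat -> Prop :=
  | gen_monoid0 : gen_monoid A 0
  | gen_monoidD (a x : nat) : A a -> gen_monoid A x -> gen_monoid A (a + x).

Definition inZ (S : nat -> Prop) (x : int) : Prop := exists n : nat, x = n%:Z /\ S n.

Definition PF (S : nat -> Prop) (x : int) : Prop :=
  ~ inZ S x /\ (forall s : nat, S s -> s <> 0%N -> inZ S (x + s%:Z)%R).

Definition gens3 (g1 g2 g3 : nat) : nat -> Prop :=
  fun n => n = g1 \/ n = g2 \/ n = g3.

(* Main.v *)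
Require Import Defs.
From mathcomp Require Import all_boot all_order all_algebra zify.
Import Order.TTheory GRing.Theory Num.Theory.

Definition hyp (m a b t : nat) :=
  (3 <= m) /\ (1 <= a) /\ (2 <= t) /\ (t <= m - 1) /\
      ((t - 1) * (a * m + 1) < b * m + t) /\ (b * m + t < t * (a * m + 1)).

Definition wf (t g h i : nat) := i %/ t * h + i %% t * g.

Lemma wf_eq t g h k j : j < t -> wf t g h (k * t + j) = k * h + j * g.
Proof.
move=> jt; have t0 : 0 < t by case: t jt.
by rewrite /wf divnMDl // modnMDl divn_small // modn_small // addn0.
Qed.

Lemma hyp_d m a b t : hyp m a b t ->
  [/\ 1 <= t * a - b, t * a - b <= a &
      t * (a * m + 1) = b * m + t + (t * a - b) * m].
Proof.
case=> h1 [h2 [h3 [h4 [h5 h6]]]].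
have hb : b < t * a by nia.
have hb2 : (t - 1) * a <= b by nia.
split; first lia.
- have e : (t - 1) * a = t * a - a by rewrite mulnBl mul1n.
  lia.
- rewrite mulnBl. nia.
Qed.

Arguments hyp_d {m a b t}.
Lemma wf_mod m a b t k j : (k * (b * m + t) + j * (a * m + 1)) %% m = (k * t + j) %% m.
Proof.
have -> : k * (b * m + t) + j * (a * m + 1) = (k * b + j * a) * m + (k * t + j) by lia.
by rewrite modnMDl.
Qed.

Lemma wf0 t g h : wf t g h 0 = 0.
Proof. by rewrite /wf div0n mod0n. Qed.

Lemma step_g m a b t i : hyp m a b t -> i < m ->
  [/\ i.+1 = m -> wf t (a * m+1) (b * m+t) (i.+1 %% m) = 0,
      i.+1 < m -> (i %% t).+1 < t ->
        wf t (a * m+1) (b * m+t) (i.+1 %% m) = wf t (a * m+1) (b * m+t) i + (a * m+1) &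
      i.+1 < m -> (i %% t).+1 = t ->
        wf t (a * m+1) (b * m+t) (i.+1 %% m) + (t*a-b) * m = wf t (a * m+1) (b * m+t) i + (a * m+1)].
Proof.
move=> H im; have [d1 da htg] := hyp_d H.
case: H => h1 [h2 [h3 [h4 [h5 h6]]]].
have t0 : 0 < t by lia.
have ei := divn_eq i t.
have jt : i %% t < t by rewrite ltn_mod.
split.
- by move=> ->; rewrite modnn wf0.
- move=> i1 j1; rewrite modn_small //.
  have -> : i.+1 = i %/ t * t + (i %% t).+1 by lia.
  rewrite wf_eq // /wf. lia.
- move=> i1 j1; rewrite modn_small //.
  have -> : i.+1 = (i %/ t).+1 * t + 0 by lia.
  rewrite wf_eq // /wf.
  have e2 : (i %% t).+1 * (a * m + 1) = t * (a * m + 1) by rewrite j1.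
  rewrite htg in e2. lia.
Qed.

Lemma step_h m a b t i : hyp m a b t -> i < m ->
  (i + t < m ->
        wf t (a * m+1) (b * m+t) ((i + t) %% m) = wf t (a * m+1) (b * m+t) i + (b * m+t)) /\
  (m <= i + t ->
        wf t (a * m+1) (b * m+t) ((i + t) %% m) + m * (a * m+1 - (i %/ t).+1 * (t*a-b))
          = wf t (a * m+1) (b * m+t) i + (b * m+t) /\ (i %/ t).+1 * (t*a-b) <= a * m).
Proof.
move=> H im; have [d1 da htg] := hyp_d H.
case: H => h1 [h2 [h3 [h4 [h5 h6]]]].
have t0 : 0 < t by lia.
have ei := divn_eq i t.
have jt : i %% t < t by rewrite ltn_mod.
split.
- move=> i1; rewrite modn_small //.
  have -> : i + t = (i %/ t).+1 * t + i %% t by lia.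
  rewrite wf_eq // /wf. lia.
- move=> i1.
  have km : (i %/ t).+1 <= m.
    have : i %/ t <= i %/ t * t by rewrite leq_pmulr.
    lia.
  have kd : (i %/ t).+1 * (t*a-b) <= a * m.
    by rewrite mulnC; apply: leq_mul.
  split=> //.
  have e1 : (i + t) %% m = i + t - m.
    rewrite -{1}(subnK i1) modnDr modn_small //. lia.
  rewrite e1.
  have -> : i + t - m = 0 * t + (i + t - m) by rewrite mul0n.
  rewrite wf_eq; last by lia.
  rewrite /wf.
  set k := i %/ t; set j := i %% t; set d := t * a - b.
  set g := a * m + 1; set h := b * m + t.
  have e2 : (i + t - m + m) * g = k.+1 * (t * g) + j * g.
    have ee : i + t - m + m = k.+1 * t + j by rewrite /k /j; lia.
    by rewrite ee mulnDl -mulnA.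
  rewrite htg in e2.
  have e3 : m * (g - k.+1 * d) = m * g - m * (k.+1 * d) by rewrite mulnBr.
  have e4 : m * (k.+1 * d) <= m * g by rewrite leq_mul2l; apply/orP; right; lia.
  rewrite e3. rewrite mulnDl in e2. lia.
Qed.

Lemma S_add A x y : gen_monoid A x -> gen_monoid A y -> gen_monoid A (x + y).
Proof.
elim=> [|c z Ac _ IH] Hy; first by rewrite add0n.
by rewrite -addnA; apply: gen_monoidD => //; apply: IH.
Qed.

Lemma S_gen m g h c : gens3 m g h c -> gen_monoid (gens3 m g h) c.
Proof. by move=> Hc; rewrite -[c]addn0; apply: gen_monoidD => //; constructor. Qed.

Lemma S_mul m g h c n : gens3 m g h c -> gen_monoid (gens3 m g h) (n * c).
Proof.
move=> Hc; elim: n => [|n IH]; first by rewrite mul0n; constructor.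
by rewrite mulSn; apply: gen_monoidD.
Qed.

Lemma W1 m a b t i : hyp m a b t -> i < m ->
  wf t (a * m+1) (b * m+t) (i.+1 %% m) <= wf t (a * m+1) (b * m+t) i + (a * m+1).
Proof.
move=> H im; have [s1 s2 s3] := @step_g _ _ _ _ i H im.
have t0 : 0 < t by case: H => _ [_ [? _]]; lia.
have jt : i %% t < t by rewrite ltn_mod.
case: (ltngtP i.+1 m) => [i1|i1|i1]; last by rewrite s1 //.
- case: (ltngtP (i %% t).+1 t) => [j1|j1|j1]; last by rewrite -s3 // leq_addr.
  + by rewrite s2.
  + lia.
- lia.
Qed.

Lemma W2 m a b t i : hyp m a b t -> i < m ->
  wf t (a * m+1) (b * m+t) ((i + t) %% m) <= wf t (a * m+1) (b * m+t) i + (b * m+t).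
Proof.
move=> H im; have [s1 s2] := @step_h _ _ _ _ i H im.
case: (ltnP (i + t) m) => i1; first by rewrite s1.
have [e _] := s2 i1; by rewrite -e leq_addr.
Qed.

Arguments W1 {m a b t i}.
Arguments W2 {m a b t i}.

Lemma memS m a b t n : hyp m a b t ->
  gen_monoid (gens3 m (a * m + 1) (b * m + t)) n <->
  wf t (a * m+1) (b * m+t) (n %% m) <= n.
Proof.
move=> H; have m0 : 0 < m by case: H => ? _; lia.
have t0 : 0 < t by case: H => _ [_ [? _]]; lia.
split.
- elim=> [|c x Hc Sx IH]; first by rewrite mod0n wf0.
  have im : x %% m < m by rewrite ltn_mod.
  case: Hc => [->|[->|->]].
  + rewrite modnDl. lia.
  + have -> : (a * m + 1 + x) %% m = (x %% m).+1 %% m.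
      by rewrite -addnA modnMDl -[(x %% m).+1]addn1 modnDml addnC.
    apply: leq_trans (W1 H im) _; rewrite [X in _ <= X]addnC leq_add2r //.
  + have -> : (b * m + t + x) %% m = (x %% m + t) %% m.
      by rewrite -addnA modnMDl addnC modnDml.
    apply: leq_trans (W2 H im) _; rewrite [X in _ <= X]addnC leq_add2r //.
- move=> Hn.
  have im : n %% m < m by rewrite ltn_mod.
  set i := n %% m in Hn im *.
  have ei := divn_eq i t.
  have wm : wf t (a * m + 1) (b * m + t) i %% m = i.
    rewrite /wf wf_mod -ei modn_small //.
  have : m %| n - wf t (a * m + 1) (b * m + t) i.
    rewrite -eqn_mod_dvd //.
    by rewrite wm.
  case/dvdnP=> c hc.
  have -> : n = c * m + (i %% t * (a * m + 1) + i %/ t * (b * m + t)).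
    rewrite /wf in hc Hn. lia.
  apply: S_add; first by apply: S_mul; left.
  by apply: S_add; apply: S_mul; right; [left|right].
Qed.

Lemma wf_modm m a b t i : 0 < t -> i < m -> wf t (a * m + 1) (b * m + t) i %% m = i.
Proof.
move=> t0 im; have ei := divn_eq i t.
by rewrite /wf wf_mod -ei modn_small.
Qed.

Lemma mod_g m a w : (w + (a * m + 1)) %% m = (w %% m).+1 %% m.
Proof.
by rewrite addnA [w + _]addnC -addnA modnMDl -[(w %% m).+1]addn1 modnDml.
Qed.

Lemma mod_h m b t w : (w + (b * m + t)) %% m = (w %% m + t) %% m.
Proof.
by rewrite addnA [w + _]addnC -addnA modnMDl modnDml.
Qed.

Arguments S_gen {m g h c}.

Lemma mod_sub {m n N} : n + m = N -> n %% m = N %% m.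
Proof. by move=> <-; rewrite modnDr. Qed.

Lemma mod_eq m n w : 0 < m -> n %% m = w %% m -> w <= n -> n < w + m -> n = w.
Proof.
move=> m0 e wn nw.
have : m %| n - w by rewrite -eqn_mod_dvd // e.
case: (posnP (n - w)) => [z|p]; first by lia.
move/(dvdn_leq p); lia.
Qed.

Open Scope ring_scope.

Lemma PF_char m a b t (x : int) : hyp m a b t ->
  PF (gen_monoid (gens3 m (a * m + 1) (b * m + t))) x <->
  exists i, [/\ (0 < i < m)%N,
    x = (wf t (a * m + 1) (b * m + t) i)%:Z - m%:Z,
    (wf t (a * m + 1) (b * m + t) (i.+1 %% m) + m <= wf t (a * m + 1) (b * m + t) i + (a * m + 1))%N &
    (wf t (a * m + 1) (b * m + t) ((i + t) %% m) + m <= wf t (a * m + 1) (b * m + t) i + (b * m + t))%N].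
Proof.
move=> H.
have m3 : (3 <= m)%N by case: H.
have m0 : (0 < m)%N by lia.
have t2 : (2 <= t)%N by case: H => _ [_ [? _]].
have t0 : (0 < t)%N by lia.
have a1 : (1 <= a)%N by case: H => _ [? _].
set S := gen_monoid _.
set g := (a * m + 1)%N; set h := (b * m + t)%N.
set w := wf t g h.
split.
- case=> nx all.
  have mz : m <> 0%N by lia.
  have gz : g <> 0%N by rewrite /g; lia.
  have hz : h <> 0%N by rewrite /h; lia.
  have [n [xn Sn]] := all m (S_gen (or_introl erefl)) mz.
  have [n1 [xn1 Sn1]] := all g (S_gen (or_intror (or_introl erefl))) gz.
  have [n2 [xn2 Sn2]] := all h (S_gen (or_intror (or_intror erefl))) hz.
  have e1 : (n1 + m = n + g)%N by lia.
  have e2 : (n2 + m = n + h)%N by lia.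
  move/(memS _ _ _ _ _ H): Sn => Sn; move/(memS _ _ _ _ _ H): Sn1 => Sn1; move/(memS _ _ _ _ _ H): Sn2 => Sn2.
  rewrite -/g -/h -/w in Sn Sn1 Sn2.
  have im : (n %% m < m)%N by rewrite ltn_mod.
  have nw : (n = w (n %% m))%N.
    apply: (@mod_eq m) => //; first by rewrite /w /g /h wf_modm.
    rewrite ltnNge; apply/negP => Hle; apply: nx.
    exists (n - m)%N; split; first by lia.
    apply/(memS _ _ _ _ _ H).
    have -> : ((n - m) %% m = n %% m)%N by apply: mod_sub; lia.
    rewrite -/g -/h -/w; lia.
  set i := (n %% m)%N in im nw.
  have r1 : (n1 %% m = i.+1 %% m)%N by rewrite (mod_sub e1) mod_g.
  have r2 : (n2 %% m = (i + t) %% m)%N by rewrite (mod_sub e2) mod_h.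
  rewrite r1 in Sn1; rewrite r2 in Sn2.
  exists i; split.
  + rewrite im andbT lt0n; apply/negP => /eqP i0.
    rewrite i0 /= (modn_small (ltnW m3)) in Sn1.
    rewrite i0 /w wf0 in nw.
    have : w 1%N = g by rewrite /w -[1%N]/(0 * t + 1)%N wf_eq // mul0n add0n mul1n.
    lia.
  + lia.
  + lia.
  + lia.
- case=> i [/andP [i0 im] xe P1 P2].
  split.
  + case=> n [xn Sn]; move/(memS _ _ _ _ _ H): Sn.
    have e : (n + m = w i)%N by lia.
    rewrite (mod_sub e) /w /g /h wf_modm //; rewrite -/g -/h -/w; lia.
  + move=> s Ss sz.
    have key : forall c, gens3 m g h c -> inZ S (x + c%:Z).
      move=> c [->|[->|->]].
      * exists (w i); split; first by lia.
        by apply/(memS _ _ _ _ _ H); rewrite /w /g /h wf_modm.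
      * exists (w i + g - m)%N; split; first by rewrite /g; lia.
        apply/(memS _ _ _ _ _ H).
        have -> : ((w i + g - m) %% m = i.+1 %% m)%N.
          rewrite (@mod_sub m (w i + g - m)%N (w i + g)%N); last by rewrite /g; lia.
          by rewrite /g mod_g /w /g /h wf_modm.
        rewrite -/g -/h -/w; lia.
      * exists (w i + h - m)%N; split; first by rewrite /h; lia.
        apply/(memS _ _ _ _ _ H).
        have -> : ((w i + h - m) %% m = (i + t) %% m)%N.
          rewrite (@mod_sub m (w i + h - m)%N (w i + h)%N); last by rewrite /h; lia.
          by rewrite /h mod_h /w /g /h wf_modm.
        rewrite -/g -/h -/w; lia.
    case: Ss sz => [//|c s' Hc Ss' _].
    have [n0 [e0 S0]] := key c Hc.
    exists (n0 + s')%N; split; first by rewrite !PoszD addrA e0.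
    exact: S_add.
Qed.

Lemma P1_iff m a b t i : hyp m a b t -> (i < m)%N ->
  (wf t (a * m + 1) (b * m + t) (i.+1 %% m) + m <= wf t (a * m + 1) (b * m + t) i + (a * m + 1))%N
  <-> (i.+1 = m \/ (i %% t).+1 = t).
Proof.
move=> H im; have [s1 s2 s3] := @step_g _ _ _ _ i H im.
have [d1 _ _] := hyp_d H.
have t0 : (0 < t)%N by case: H => _ [_ [? _]]; lia.
have a1 : (1 <= a)%N by case: H => _ [? _].
have jt : (i %% t < t)%N by rewrite ltn_mod.
have am : (m <= a * m)%N by rewrite leq_pmull.
have dm : (m <= (t * a - b) * m)%N by rewrite leq_pmull.
move: s1 s2 s3 am dm.
move: (wf t (a * m + 1) (b * m + t) (i.+1 %% m)) (wf t (a * m + 1) (b * m + t) i) => X Y.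
move: (a * m)%N ((t * a - b) * m)%N => A D s1 s2 s3 am dm.
case: (ltngtP i.+1 m) => [i1|i1|i1]; last first.
- rewrite s1 //; split=> _; [by left | lia].
- lia.
- case: (ltngtP (i %% t).+1 t) => [j1|j1|j1].
  + rewrite s2 //; split; [lia | case; lia].
  + lia.
  + have := s3 i1 j1; split=> _; [by right | lia].
Qed.

Lemma P2_iff m a b t i : hyp m a b t -> (i < m)%N ->
  (wf t (a * m + 1) (b * m + t) ((i + t) %% m) + m <= wf t (a * m + 1) (b * m + t) i + (b * m + t))%N
  <-> (m <= i + t)%N.
Proof.
move=> H im; have [s1 s2] := @step_h _ _ _ _ i H im.
case: (ltnP (i + t) m) => i1.
- rewrite s1 //; split=> //; lia.
- have [e kd] := s2 i1; split=> // _.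
  rewrite -e leq_add2l.
  by apply: leq_pmulr; lia.
Qed.

Lemma cond_char m t i : (2 <= t)%N -> (t <= m - 1)%N -> (0 < i < m)%N ->
  ((i.+1 = m \/ (i %% t).+1 = t) /\ (m <= i + t)%N) <->
  (i = (m - 1)%N \/ (~~ (t %| m)%N /\ i = ((m - 1) %/ t).-1 * t + (t - 1))%N).
Proof.
move=> t2 tm /andP [i0 im].
have t0 : (0 < t)%N by lia.
have e := divn_eq (m - 1) t.
have rt : ((m - 1) %% t < t)%N by rewrite ltn_mod.
move: e rt; set q := ((m - 1) %/ t)%N; set r := ((m - 1) %% t)%N => e rt.
have q1 : (1 <= q)%N.
  rewrite lt0n; apply/negP => /eqP q0; rewrite q0 mul0n add0n in e; lia.
have eq1 : (q.-1 * t + t = q * t)%N by rewrite addnC -mulSn prednK.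
split.
- case=> [[i1|j1] it].
  + left; lia.
  + case: (eqVneq i.+1 m) => [i1|i1]; first by left; lia.
    right.
    have ei := divn_eq i t.
    move: ei; set k := (i %/ t)%N => ei.
    have ek : (i.+1 = k.+1 * t)%N by rewrite mulSn; lia.
    have qk : q = k.+1.
      rewrite /q (_ : m - 1 = k.+1 * t + (m - 1 - k.+1 * t))%N; last by lia.
      by rewrite divnMDl // divn_small ?addn0 //; lia.
    split.
    * rewrite /dvdn (_ : m = k.+1 * t + (m - k.+1 * t))%N; last by lia.
      rewrite modnMDl modn_small; last by lia.
      apply/negP => /eqP; lia.
    * rewrite qk /=; lia.
- case=> [->|[nd ->]].
  + split; [by left; lia | lia].
  + have rn : r.+1 <> t.
      move=> rt1; move/negP: nd; apply.
      rewrite (_ : m = q.+1 * t)%N; first by apply: dvdn_mull.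
      rewrite mulSn; lia.
    split.
    * right; rewrite modnMDl modn_small //; lia.
    * lia.
Qed.

Arguments cond_char {m t i}.
Arguments P1_iff {m a b t i}.
Arguments P2_iff {m a b t i}.

Theorem proposition3p22 (m a b t : nat) :
  (3 <= m)%N -> (1 <= a)%N -> (2 <= t)%N -> (t <= m - 1)%N ->
  ((t - 1) * (a * m + 1) < b * m + t)%N ->
  (b * m + t < t * (a * m + 1))%N ->
  let S := gen_monoid (gens3 m (a * m + 1) (b * m + t)) in
  let q := ((m - 1) %/ t)%N in
  let r := ((m - 1) %% t)%N in
  ((t %| m)%N ->
     forall x : int, PF S x <->
       x = (q%:Z * (b * m + t)%:Z + r%:Z * (a * m + 1)%:Z - m%:Z)%R) /\
  (~~ (t %| m)%N ->
     forall x : int, PF S x <->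
       (x = ((q%:Z - 1) * (b * m + t)%:Z + (t%:Z - 1) * (a * m + 1)%:Z - m%:Z)%R
        \/ x = (q%:Z * (b * m + t)%:Z + r%:Z * (a * m + 1)%:Z - m%:Z)%R)).
Proof.
move=> h1 h2 h3 h4 h5 h6 S q r.
have H : hyp m a b t by rewrite /hyp; tauto.
have t0 : (0 < t)%N by lia.
have q1 : (1 <= q)%N.
  have e := divn_eq (m - 1) t.
  have rt : ((m - 1) %% t < t)%N by rewrite ltn_mod.
  rewrite lt0n; apply/negP => /eqP q0; rewrite -/q q0 mul0n add0n in e; lia.
have key : forall x, PF S x <-> exists i, [/\ (0 < i < m)%N,
    x = (wf t (a * m + 1) (b * m + t) i)%:Z - m%:Z &
    (i = (m - 1)%N \/ (~~ (t %| m)%N /\ i = (q.-1 * t + (t - 1))%N))].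
  move=> x; apply: (iff_trans (PF_char _ _ _ _ x H)); split.
  - case=> i [i0 xe P1 P2]; exists i; split => //.
    have im : (i < m)%N by case/andP: i0.
    apply/(cond_char h3 h4 i0); split.
    + exact/(P1_iff H im).
    + exact/(P2_iff H im).
  - case=> i [i0 xe C]; exists i.
    have im : (i < m)%N by case/andP: i0.
    have [C1 C2] := (proj2 (cond_char h3 h4 i0) C).
    split => //.
    + exact/(P1_iff H im).
    + exact/(P2_iff H im).
have w1 : (wf t (a * m + 1) (b * m + t) (m - 1))%:Z
          = q%:Z * (b * m + t)%:Z + r%:Z * (a * m + 1)%:Z.
  by rewrite /wf PoszD !PoszM.
have w0 : (wf t (a * m + 1) (b * m + t) (q.-1 * t + (t - 1)))%:Z
          = (q%:Z - 1) * (b * m + t)%:Z + (t%:Z - 1) * (a * m + 1)%:Z.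
  rewrite wf_eq; last by lia.
  rewrite PoszD !PoszM -!subn1 -!subzn //; lia.
have m1 : (0 < m - 1 < m)%N by apply/andP; split; lia.
split.
- move=> dv x; rewrite key; split.
  + case=> i [i0 -> [->|[nd _]]]; first by rewrite w1.
    by rewrite dv in nd.
  + move=> ->; exists (m - 1)%N; split => //; last by left.
- move=> nd x; rewrite key; split.
  + case=> i [i0 -> [->|[_ ->]]]; first by right; rewrite w1.
    by left; rewrite w0.
  + case=> ->.
    * exists (q.-1 * t + (t - 1))%N; split; last by right.
      -- have e := divn_eq (m - 1) t.
         have eq1 : (q.-1 * t + t = q * t)%N by rewrite addnC -mulSn prednK.
         rewrite -/q in e; apply/andP; split; lia.
      -- by rewrite w0.
    * exists (m - 1)%N; split => //; last by left.
Qed.
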